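(* Let $K$ be a field, $R=K[A,X]=K[a_1,\dots,a_{N_A},x_1,\dots,x_{N_X}]$, $\tau$ an $X$-elimination term-ordering on $R$, and $I$ an ideal of $R$. Throughout the execution of the algorithm CGS-Iter (described in the context) on input $I$, whenever an ideal $\mathfrak b\subseteq K[A]$ is added to the set VanishingToDo: (1) $\mathfrak b\not\supseteq\mathfrak z$ for every ideal $\mathfrak z$ in the current VanishingToDo; (2) $\mathfrak b\not\subseteq\mathfrak z$ for every ideal $\mathfrak z$ that has ever been listed in VanishingToDo; (3) VanishingToDo is minimalized, i.e. no ideal in it contains another ideal in it.
   Context: Notation. $K$ is a field with algebraic closure $\bar K$; $A=\{a_1,\dots,a_{N_A}\}$ are parameters and $X=\{x_1,\dots,x_{N_X}\}$ indeterminates. For an ideal $\mathfrak a\subseteq K[A]$, $\mathbb V(\mathfrak a)\subseteq\bar K^{N_A}$ denotes its zero set; ideals of $K[A]$ are regarded as their extensions in $K[A,X]$ when added to ideals of $K[A,X]$. A term-ordering $\tau$ on power-products of $K[A,X]$ is an $X$-elimination ordering if every power-product involving only the $a_i$ is smaller than every power-product involving some $x_j$; $\tau_X$ is its restriction to power-products in $X$. Viewing $f\in K[A,X]$ as an element of $K[A][X]$, $\mathrm{LPP}_X(f)\in K[X]$ is its $\tau_X$-greatest power-product in $X$ and $\mathrm{LC}_X(f)\in K[A]$ its coefficient. For finite $F\subseteq K[A,X]$, $\mathrm{MB}(F)$ is the minimal set of monomial generators of $\langle\mathrm{LPP}_X(f)\mid f\in F\rangle\subseteq K[X]$. ''Minimalized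 $S$'', for a finite set $S$ of ideals, denotes the set of inclusion-minimal members of $S$ (one copy of each). Algorithm CGS-Iter. Input: ideal $I\subseteq R$. 1. VanishingToDo $:=\{\langle0\rangle\}$ (set of ideals of $K[A]$); FinalCases $:=\emptyset$. 2. While VanishingToDo $\neq\emptyset$: 2.1 choose (arbitrarily) and remove one ideal $\mathfrak a$ from VanishingToDo; 2.2 $J:=I+\mathfrak a$; 2.3 compute a $\tau$-Gröbner basis $G$ of $J$; 2.4 $\mathfrak g:=J\cap K[A]$; 2.5 if $\mathbb V(\mathfrak a)\setminus\mathbb V(\mathfrak g)\neq\emptyset$: 2.5.1 append $(\mathbb V(\mathfrak a)\setminus\mathbb V(\mathfrak g),\{1\})$ to FinalCases; 2.5.2 if $\mathfrak g$ contains no ideal currently in VanishingToDo, append $\mathfrak g$ to VanishingToDo; 2.6 otherwise: 2.6.1 $M:=\mathrm{MB}(G\setminus K[A])$; 2.6.2 $G_M:=\{g\in G\mid\mathrm{LPP}_X(g)\in M\}$; 2.6.3 for each $t\in M$, $\mathfrak c_t:=\langle\mathrm{LC}_X(g)\mid g\in G,\ \mathrm{LPP}_X(g)=t\rangle\subseteq K[A]$; 2.6.4 append $\big(\mathbb V(\mathfrak g)\setminus\bigcup_{t\in M}\mathbb V(\mathfrak c_t),\ G_M\big)$ to FinalCases; 2.6.5 NewVanishing $:=$ minimalized $\{\mathfrak c_t+\mathfrak g\mid t\in M,\ \mathfrak c_t\not\subseteq\mathfrak g\}$; 2.6.6 for each $\mathfrak b$ in NewVanishing: if $\mathfrak b$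 contains no ideal currently in VanishingToDo, append $\mathfrak b$ to VanishingToDo. Output: FinalCases. *)

(* Defs.v *)
From mathcomp Require Import all_boot all_algebra.
From mathcomp.multinomials Require Import mpoly.
From Stdlib Require List.

Set Implicit Arguments.
Unset Strict Implicit.
Unset Printing Implicit Defensive.

Local Open Scope ring_scope.

(* Conventions: R = K[A,X] is {mpoly K[NA + NX]}; the variables with index
   i < NA are the parameters a_1..a_NA, those with index >= NA are the
   indeterminates x_1..x_NX.  Ideals (of R, and of K[A] viewed inside R)
   are represented as predicates on R. *)

Section CGS.

Variables (K : fieldType) (NA NX : nat).

Notation n := (NA + NX)%N.
Notation R := {mpoly K[n]}.
Notation mnT := 'X_{1..n}.

Definition pureA (m : mnT) : bool := [forall i : 'I_n, (NA <= i)%N ==> (m i == 0%N)].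

Definition mA (m : mnT) : mnT := [multinom (if (i < NA)%N then m i else 0%N) | i < n].
Definition mX (m : mnT) : mnT := [multinom (if (i < NA)%N then 0%N else m i) | i < n].

Definition term_order (le : rel mnT) : Prop :=
  [/\ reflexive le, transitive le, antisymmetric le, total le
    & (forall m1 m2 m3, le m1 m2 -> le (m1 + m3)%MM (m2 + m3)%MM)] /\
  (forall m, le 0%MM m).

Definition ltmo (le : rel mnT) (m1 m2 : mnT) : bool := le m1 m2 && (m1 != m2).

Definition X_elim (le : rel mnT) : Prop :=
  forall m1 m2 : mnT, pureA m1 -> ~~ pureA m2 -> ltmo le m1 m2.

(* the le-greatest element of a sequence (0 for the empty sequence) *)
Definition maxmo (le : rel mnT) (s : seq mnT) : mnT :=
  foldr (fun m acc => if le acc m then m else acc) 0%MM s.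

Definition LPP (le : rel mnT) (f : R) : mnT := maxmo le (msupp f).

Definition inKA (f : R) : bool := all pureA (msupp f).

(* viewing f in K[A][X]: its tau_X-greatest power-product in X and its
   coefficient in K[A] (the restriction tau_X of tau to power-products in
   X is tau itself on the monomials mX m) *)
Definition LPPX (le : rel mnT) (f : R) : mnT := maxmo le (map mX (msupp f)).
Definition LCX (le : rel mnT) (f : R) : R :=
  \sum_(m <- msupp f | mX m == LPPX le f) f@_m *: 'X_[mA m].

Definition subI (a b : R -> Prop) : Prop := forall p, a p -> b p.
Definition eqI (a b : R -> Prop) : Prop := forall p, a p <-> b p.

Definition is_ideal (S : R -> Prop) : Prop :=
  [/\ S 0, (forall p q, S p -> S q -> S (p + q)) & (forall r p, S p -> S (r * p))].

(* ideal generated by S in the subring of those elements satisfying Ring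
   (Ring = everything: ideal of R; Ring = inKA: ideal of K[A]) *)
Inductive gen_in (Ring : R -> Prop) (S : R -> Prop) : R -> Prop :=
| gen_base p : S p -> gen_in Ring S p
| gen_zero : gen_in Ring S 0
| gen_add p q : gen_in Ring S p -> gen_in Ring S q -> gen_in Ring S (p + q)
| gen_mul r p : Ring r -> gen_in Ring S p -> gen_in Ring S (r * p).

Definition genR (S : R -> Prop) : R -> Prop := gen_in (fun _ => True) S.
Definition genKA (S : R -> Prop) : R -> Prop := gen_in (fun r => inKA r) S.

Definition addR (I J : R -> Prop) : R -> Prop := genR (fun p => I p \/ J p).
Definition addKA (a b : R -> Prop) : R -> Prop := genKA (fun p => a p \/ b p).

Definition zeroI : R -> Prop := fun p => p = 0.

Definition is_GB (le : rel mnT) (J : R -> Prop) (G : seq R) : Prop :=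
  (forall g, g \in G -> g != 0 /\ J g) /\
  (forall f, J f -> f != 0 -> exists2 g, g \in G & (LPP le g <= LPP le f)%MM).

Variables (L : closedFieldType) (iota : {rmorphism K -> L}).

Definition extpt (v : 'I_NA -> L) : 'I_n -> L :=
  fun i => match split i with inl j => v j | inr _ => 0 end.

Definition evalA (v : 'I_NA -> L) (p : R) : L := (map_mpoly iota p).@[extpt v].

Definition inV (a : R -> Prop) (v : 'I_NA -> L) : Prop := forall p, a p -> evalA v p = 0.

Definition Vdiff_ne (a g : R -> Prop) : Prop := exists v, inV a v /\ ~ inV g v.

Variables (le : rel mnT) (I : R -> Prop).

Definition Jof (a : R -> Prop) : R -> Prop := addR I a.
Definition gof (a : R -> Prop) : R -> Prop := fun p => Jof a p /\ inKA p.

Definition MBof (G : seq R) : seq mnT :=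
  let T := map (LPPX le) [seq g <- G | ~~ inKA g] in
  undup [seq t <- T | ~~ has (fun t' => (t' <= t)%MM && (t' != t)) T].

Definition cof (G : seq R) (t : mnT) : R -> Prop :=
  genKA (fun p => exists2 g, g \in G & LPPX le g = t /\ p = LCX le g).

Definition candP (a : R -> Prop) (G : seq R) (b : R -> Prop) : Prop :=
  exists t, t \in MBof G /\ ~ subI (cof G t) (gof a) /\ b = addKA (cof G t) (gof a).

(* NV is (an enumeration, in some order, of) the minimalized set of the
   set of ideals P: the inclusion-minimal members, one copy of each *)
Definition minimalized (P : (R -> Prop) -> Prop) (NV : seq (R -> Prop)) : Prop :=
  [/\ (forall b, List.In b NV -> P b /\ (forall c, P c -> subI c b -> subI b c)),
      (forall c, P c -> (forall c', P c' -> subI c' c -> subI c c') ->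
                 exists b, List.In b NV /\ eqI b c)
    & (forall i j, (i < size NV)%N -> (j < size NV)%N -> i <> j ->
                 ~ eqI (nth (fun _ => False) NV i) (nth (fun _ => False) NV j))].

(* states of the execution:
   todo    = current content of VanishingToDo,
   hist    = every ideal that has ever been listed in VanishingToDo,
   pending = ideals still to be examined in the current step 2.5.2 / 2.6.6 *)
Record state := mkState {
  todo : seq (R -> Prop);
  hist : seq (R -> Prop);
  pending : seq (R -> Prop) }.

Definition init_state : state := mkState [:: zeroI] [:: zeroI] [::].

(* one elementary step of CGS-Iter (FinalCases, which does not influence
   VanishingToDo, is not recorded) *)
Inductive cgs_step : state -> state -> Prop :=
(* 2.1-2.5: choose and remove a, compute a GB G of J, case V(a)\V(g) <> {} *)
| step_case1 T1 a T2 H G :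
    is_GB le (Jof a) G ->
    Vdiff_ne a (gof a) ->
    cgs_step (mkState (T1 ++ a :: T2) H [::]) (mkState (T1 ++ T2) H [:: gof a])
(* 2.1-2.4, 2.6: otherwise, compute NewVanishing *)
| step_case2 T1 a T2 H G NV :
    is_GB le (Jof a) G ->
    ~ Vdiff_ne a (gof a) ->
    minimalized (candP a G) NV ->
    cgs_step (mkState (T1 ++ a :: T2) H [::]) (mkState (T1 ++ T2) H NV)
| step_add T H b P :
    ~ (exists z, List.In z T /\ subI z b) ->
    cgs_step (mkState T H (b :: P)) (mkState (T ++ [:: b]) (H ++ [:: b]) P)
| step_skip T H b P :
    (exists z, List.In z T /\ subI z b) ->
    cgs_step (mkState T H (b :: P)) (mkState T H P).

Inductive reachable : state -> Prop :=
| reach_init : reachable init_state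
| reach_step s s' : reachable s -> cgs_step s s' -> reachable s'.

End CGS.

(* Main.v *)
Require Import Defs.
From mathcomp Require Import all_boot all_algebra.
From mathcomp.multinomials Require Import mpoly.
From Stdlib Require List.
Local Open Scope ring_scope.

Section A.
Variables (K : fieldType) (NA NX : nat).
Notation R := {mpoly K[NA + NX]}.

Lemma pureAD (m1 m2 : 'X_{1..NA + NX}) : pureA m1 -> pureA m2 -> pureA (m1 + m2)%MM.
Proof.
move=> /forallP h1 /forallP h2; apply/forallP=> i; apply/implyP=> hi.
rewrite mnmDE; move: (h1 i) (h2 i); rewrite hi /= => /eqP -> /eqP ->; done.
Qed.

Lemma inKA0 : inKA (0 : R).
Proof. by rewrite /inKA msupp0. Qed.

Lemma inKAD (p q : R) : inKA p -> inKA q -> inKA (p + q).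
Proof.
move=> /allP hp /allP hq; apply/allP=> m /msuppD_le; rewrite mem_cat => /orP[].
by apply: hp. by apply: hq.
Qed.

Lemma inKAM (p q : R) : inKA p -> inKA q -> inKA (p * q).
Proof.
move=> /allP hp /allP hq; apply/allP=> m /msuppM_le /allpairsP [[m1 m2] /= [h1 h2 ->]].
by apply: pureAD; [apply: hp|apply: hq].
Qed.

Lemma inKAZX (c : K) (m : 'X_{1..NA + NX}) : inKA (c *: 'X_[mA m] : R).
Proof.
apply/allP=> m' /msuppZ_le; rewrite msuppX inE => /eqP ->.
apply/forallP=> i; apply/implyP=> hi; rewrite mnmE.
by rewrite ltnNge hi.
Qed.

Lemma inKA_LCX le (g : R) : inKA (LCX le g).
Proof.
rewrite /LCX; elim/big_ind: _ => //; first exact: inKA0.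
  by move=> x y; apply: inKAD.
move=> m _; exact: inKAZX.
Qed.

Lemma genKA_inKA (S : R -> Prop) : (forall p, S p -> inKA p) ->
  forall p, genKA S p -> inKA p.
Proof.
move=> hS p; elim=> //.
- exact: inKA0.
- by move=> ? ? _ ? _ ?; apply: inKAD.
- by move=> r ? hr _ ?; apply: inKAM.
Qed.
End A.

Section M.
Variables (K : fieldType) (NA NX : nat).
Notation R := {mpoly K[NA + NX]}.
Notation ideal := (R -> Prop).

Lemma inapp (l1 l2 : seq ideal) x : List.In x (l1 ++ l2) -> List.In x l1 \/ List.In x l2.
Proof. exact: List.in_app_or. Qed.

Fixpoint NoContain (l : seq ideal) : Prop :=
  match l with
  | [::] => True
  | y :: l' => (forall z, List.In z l' -> ~ subI y z /\ ~ subI z y) /\ NoContain l'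
  end.

Lemma NoContain_rem (T1 T2 : seq ideal) a :
  NoContain (T1 ++ a :: T2) -> NoContain (T1 ++ T2).
Proof.
elim: T1 => [|y T1 IH] /=; first by case.
case=> h1 h2; split; last exact: IH.
move=> z hz; apply: h1; apply/List.in_or_app; have [] := List.in_app_or _ _ _ hz.
  by left. by move=> h; right; right.
Qed.

Lemma NoContain_snoc (T : seq ideal) b :
  NoContain T -> (forall y, List.In y T -> ~ subI y b /\ ~ subI b y) ->
  NoContain (T ++ [:: b]).
Proof.
elim: T => [|y T IH] /=; first by [].
case=> h1 h2 hb; split; last by apply: IH => // z hz; apply: hb; right.
move=> z /inapp [hz|[hz|[]]]; first exact: h1.
by subst z; exact: hb (or_introl erefl).
Qed.

Lemma In_nth (l : seq ideal) d j : (j < size l)%N -> List.In (nth d l j) l.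
Proof.
elim: l j => [|y l IH] [|j] //= hj; first by left.
by right; apply: IH.
Qed.

Lemma NoContain_nth (l : seq ideal) : NoContain l ->
  forall i j, (i < size l)%N -> (j < size l)%N -> i <> j ->
  ~ subI (nth (fun _ => False) l i) (nth (fun _ => False) l j).
Proof.
elim: l => [|y l IH] //=; case=> h1 h2; case=> [|i]; case=> [|j] //= hi hj hij.
- move=> hs; have /h1 [] := @In_nth l (fun _ => False) j hj; by [].
- move=> hs; have /h1 [] := @In_nth l (fun _ => False) i hi; by [].
- by apply: IH => // e; apply: hij; rewrite e.
Qed.

Variables (L : closedFieldType) (iota : {rmorphism K -> L}).
Variables (le : rel 'X_{1..NA + NX}) (I : ideal).

Definition Inv (s : state K NA NX) : Prop :=
  [/\ (forall y, List.In y (todo s) -> List.In y (hist s)),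
      (forall y z, List.In y (todo s) -> List.In z (hist s) -> subI y z -> subI z y),
      (forall p z, List.In p (pending s) -> List.In z (hist s) -> subI p z ->
           List.In z (todo s) /\ subI z p),
      (forall p q, List.In p (pending s) -> List.In q (pending s) -> subI p q -> subI q p) &
      [/\ (forall y, List.In y (todo s) -> forall p, y p -> inKA p),
          (forall y, List.In y (pending s) -> forall p, y p -> inKA p)
        & NoContain (todo s)]].

Lemma sub_gof (a : ideal) : (forall p, a p -> inKA p) -> subI a (gof I a).
Proof. move=> h p ap; split; [by apply: gen_base; right | exact: h]. Qed.

Lemma Inv_step s s' : Inv s -> cgs_step iota le I s s' -> Inv s'.
Proof.
move=> hI st; case: st hI => [T1 a T2 H G _ [v [va nvg]]|T1 a T2 H G NV _ _ [m1 m2 m3]|T H b P hadd|T H b P _] [h1 h2 h3 h4 [h5 h6 h7]] /=.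
-
  have aT : List.In a (T1 ++ a :: T2) by apply/List.in_or_app; right; left.
  have sa : subI a (gof I a) by apply: sub_gof; apply: h5 aT.
  have ns : ~ subI (gof I a) a by move=> hs; apply: nvg => p /hs; apply: va.
  have inT y : List.In y (T1 ++ T2) -> List.In y (T1 ++ a :: T2).
    by move/inapp=> [?|?]; apply/List.in_or_app; [left|right; right].
  split => /=.
  + by move=> y /inT /h1.
  + by move=> y z /inT; apply: h2.
  + move=> p z [<-|[]] hz hs; exfalso; apply: ns.
    have := h2 _ _ aT hz (fun q aq => hs _ (sa _ aq)).
    by move=> hza q /hs /hza.
  + by move=> p q [<-|[]] [<-|[]].
  + split.
    * by move=> y /inT; apply: h5.
    * by move=> y [<-|[]] p [].
    * exact: NoContain_rem h7.
-
  have aT : List.In a (T1 ++ a :: T2) by apply/List.in_or_app; right; left.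
  have sa : subI a (gof I a) by apply: sub_gof; apply: h5 aT.
  have inT y : List.In y (T1 ++ T2) -> List.In y (T1 ++ a :: T2).
    by move/inapp=> [?|?]; apply/List.in_or_app; [left|right; right].
  have strict b : List.In b NV -> subI a b /\ ~ subI b a.
    move=> /m1 [[t [_ [nc ->]]] _]; split.
      by move=> p /sa gp; apply: gen_base; right.
    move=> hs; apply: nc => p cp; apply: sa; apply: hs; apply: gen_base; left.
    exact: cp.
  split => /=.
  + by move=> y /inT /h1.
  + by move=> y z /inT; apply: h2.
  + move=> p z hp hz hs; exfalso; have [sp nsp] := strict _ hp; apply: nsp.
    have := h2 _ _ aT hz (fun q aq => hs _ (sp _ aq)).
    by move=> hza q /hs /hza.
  + move=> p q hp hq hpq; have [cp _] := m1 _ hp; have [_ mq] := m1 _ hq.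
    exact: mq.
  + split.
    * by move=> y /inT; apply: h5.
    * move=> y /m1 [[t [_ [_ ->]]] _]; apply: genKA_inKA.
      move=> p [|[_ ?]] //; apply: genKA_inKA => q [g _ [_ ->]].
      exact: inKA_LCX.
    * exact: NoContain_rem h7.
-
  have hbT : forall y, List.In y T -> ~ subI y b by move=> y yT hs; apply: hadd; exists y.
  have bH : forall z, List.In z H -> ~ subI b z.
    by move=> z zH hs; have [zT zb] := h3 _ _ (or_introl erefl) zH hs; apply: hbT zT zb.
  have inS (l : seq ideal) y : List.In y (l ++ [:: b]) -> List.In y l \/ y = b.
    by move/inapp=> [?|[<-|[]]]; [left|right].
  split => /=.
  + move=> y /inS [/h1 ?|->]; apply/List.in_or_app; [by left|by right; left].
  + move=> y z /inS [yT|->] /inS [zH|->].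
    * exact: h2.
    * by move=> hs; exfalso; apply: hbT yT hs.
    * by move=> hs; exfalso; apply: bH zH hs.
    * done.
  + move=> p z hp /inS [zH|->] hs.
      have [zT zp] := h3 _ _ (or_intror hp) zH hs.
      by split => //; apply/List.in_or_app; left.
    split; first by apply/List.in_or_app; right; left.
    exact: h4 (or_intror hp) (or_introl erefl) hs.
  + by move=> p q hp hq; apply: h4; right.
  + split.
    * move=> y /inS [yT|->]; [exact: h5 | exact: h6 (or_introl erefl)].
    * by move=> y hy; apply: h6; right.
    * apply: NoContain_snoc => // y yT; split; first exact: hbT.
      exact: bH (h1 _ yT).
-
  split => //=.
  + by move=> p z hp; apply: h3; right.
  + by move=> p q hp hq; apply: h4; right.
  + by split => // y hy; apply: h6; right.
Qed.

Lemma Inv_reach s : reachable iota le I s -> Inv s.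
Proof.
elim=> [|s0 s' _ IH st]; last exact: Inv_step IH st.
split => //=.
- by move=> y z [<-|[]] [<-|[]].
- split => //= y [<-|[]] p -> ; exact: inKA0.
Qed.

End M.

Theorem theorem4 (K : fieldType) (NA NX : nat)
    (L : closedFieldType) (iota : {rmorphism K -> L})
    (* L is an algebraic closure of K (via iota) *)
    (Lalg : forall x : L, exists2 p : {poly K}, p != 0 & root (map_poly iota p) x)
    (le : rel 'X_{1..NA + NX}) (Hterm : term_order le) (Helim : X_elim le)
    (I : {mpoly K[NA + NX]} -> Prop) (HI : is_ideal I)
    (T H : seq ({mpoly K[NA + NX]} -> Prop)) (b : {mpoly K[NA + NX]} -> Prop)
    (P : seq ({mpoly K[NA + NX]} -> Prop)) :
  reachable iota le I (mkState T H (b :: P)) ->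
  (* b is added to VanishingToDo at this point *)
  ~ (exists z, List.In z T /\ subI z b) ->
  [/\ (* (1) *) (forall z, List.In z T -> ~ subI z b),
      (* (2) *) (forall z, List.In z H -> ~ subI b z)
    & (* (3) *) (forall i j, (i < size (T ++ [:: b]))%N -> (j < size (T ++ [:: b]))%N ->
         i <> j ->
         ~ subI (nth (fun _ => False) (T ++ [:: b]) i) (nth (fun _ => False) (T ++ [:: b]) j))].
Proof.
move=> hr hadd.
have [h1 h2 h3 h4 [h5 h6 h7]] := @Inv_reach K NA NX L iota le I _ hr.
rewrite /= in h1 h2 h3 h4 h5 h6 h7.
have hbT : forall y, List.In y T -> ~ subI y b by move=> y yT hs; apply: hadd; exists y.
have bH : forall z, List.In z H -> ~ subI b z.
  by move=> z zH hs; have [zT zb] := h3 _ _ (or_introl erefl) zH hs; apply: hbT zT zb.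
split => //.
apply: NoContain_nth; apply: NoContain_snoc => // y yT; split; first exact: hbT.
exact: bH (h1 _ yT).
Qed.
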